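(* Let $A_1,A_2\in\mathbb{R}^{2\times2}$ be Hurwitz matrices. If $\det([A_1,A_2])\ge0$, where $[A_1,A_2]=A_1A_2-A_2A_1$, then the switched system $\dot x=u(t)A_1x+(1-u(t))A_2x$, $u:[0,\infty)\to\{0,1\}$ measurable, admits a common quadratic Lyapunov function, i.e. there is a symmetric positive definite $P$ such that $A_1^TP+PA_1$ and $A_2^TP+PA_2$ are both negative definite.
   Context: A real $2\times2$ matrix is Hurwitz if all its eigenvalues have negative real part. *)

(* Defs.v *)
(* real 2x2 matrices over an arbitrary real closed field R
   (the statement over the reals is the case R = reals; it is first-order,
   so stating it for every rcfType is a faithful generalization). *)
From HB Require Import structures.
From mathcomp Require Import all_boot all_order all_algebra.
Set Implicit Arguments. Unset Strict Implicit. Unset Printing Implicit Defensive.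
Import Order.TTheory GRing.Theory Num.Theory.
Local Open Scope ring_scope.

(* a + i b (a, b real) is a complex eigenvalue of the real matrix A:
   there is a nonzero complex vector v = x + i y with A v = (a + i b) v,
   written out in real and imaginary parts:
     A x = a x - b y,   A y = b x + a y,   (x, y) <> (0, 0). *)
Definition complex_eigenvalue (R : rcfType) (n : nat) (A : 'M[R]_n) (a b : R) : Prop :=
  exists x y : 'cV[R]_n,
    [/\ (x != 0) || (y != 0),
        A *m x = a *: x - b *: y &
        A *m y = b *: x + a *: y].

Definition hurwitz (R : rcfType) (n : nat) (A : 'M[R]_n) : Prop :=
  forall a b : R, complex_eigenvalue A a b -> a < 0.

Definition quad_form (R : rcfType) (n : nat) (M : 'M[R]_n) (x : 'cV[R]_n) : R :=
  (x^T *m M *m x) 0 0.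

Definition pos_def (R : rcfType) (n : nat) (P : 'M[R]_n) : Prop :=
  P^T = P /\ forall x : 'cV[R]_n, x != 0 -> 0 < quad_form P x.

Definition neg_def (R : rcfType) (n : nat) (M : 'M[R]_n) : Prop :=
  M^T = M /\ forall x : 'cV[R]_n, x != 0 -> quad_form M x < 0.

Definition commutator (R : rcfType) (n : nat) (A B : 'M[R]_n) : 'M[R]_n :=
  A *m B - B *m A.

(* Main.v *)
Require Import Defs.
From HB Require Import structures.
From mathcomp Require Import all_boot all_order all_algebra.
From Stdlib Require Import Ring.
Import Order.TTheory GRing.Theory Num.Theory.
Local Open Scope ring_scope.
Section S.
Variable R : rcfType.
Definition ad (x y : R) : R := x + y.
Definition mu (x y : R) : R := x * y.
Definition op (x : R) : R := - x.
Definition ze : R := 0.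
Definition on : R := 1.
Lemma adE x y : x + y = ad x y. Proof. by []. Qed.
Lemma muE x y : x * y = mu x y. Proof. by []. Qed.
Lemma opE x : - x = op x. Proof. by []. Qed.
Lemma zeE : 0 = ze. Proof. by []. Qed.
Lemma onE : 1 = on. Proof. by []. Qed.
Lemma RT : @ring_theory R ze on ad mu (fun x y => ad x (op y)) op eq.
Proof. rewrite /ad/mu/op/ze/on. split=> //=; [exact: add0r|exact: addrC|exact: addrA|exact: mul1r|exact: mulrC|exact: mulrA|exact: mulrDl|exact: subrr]. Qed.
Add Ring RRing : RT.
Lemma eqR (x y : R) : @eq R x y -> x = y. Proof. by []. Qed.
Ltac rg := apply: eqR; rewrite ?(mulrS, mulr0n, exprS, expr0); rewrite ?(adE, muE, opE, zeE, onE); ring.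

Lemma ltE (x y z : R) : y - x = z -> 0 < z -> x < y.
Proof. by move=> <-; rewrite subr_gt0. Qed.
Lemma leE (x y z : R) : y - x = z -> 0 <= z -> x <= y.
Proof. by move=> <-; rewrite subr_ge0. Qed.
Lemma sq_ge0 (x : R) : 0 <= x * x.
Proof. by rewrite -expr2 sqr_ge0. Qed.
Lemma sq_gt0 (x : R) : x != 0 -> 0 < x * x.
Proof. by move=> h; rewrite -expr2 exprn_even_gt0. Qed.

Definition Qf (a b c : R) : R := a*c - b*b.
Definition Lf (p q r s a b c : R) : R := b*(p-s) - a*q + c*r.
Definition good (p q r s a b c : R) :=
  Lf p q r s a b c * Lf p q r s a b c < 4 * (p*s - q*r) * Qf a b c.

Lemma key_np (D m k sg w QC : R) : 0 < D -> 0 < m -> 0 <= k -> sg != 0 -> 0 <= QC ->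
  m*(w*w) <= 4*D*k ->
  (sg* m*w)*(sg* m*w) < 4*D*(k*k*QC + k*(sg*sg)* m + (sg*sg)*(m* m)).
Proof.
move=> hD hm hk hs hQ hw.
apply: (@ltE _ _ (4*D*(k*k)*QC + (sg*sg)* m*(4*D*k - m*(w*w)) + 4*D*(sg*sg)*(m* m))); first by rg.
have h4 : 0 < 4 :> R by [].
apply: ltr_wpDl; [apply: addr_ge0|].
- by apply: mulr_ge0 => //; apply: mulr_ge0; [apply: mulr_ge0; [apply: ltW|apply: ltW] | apply: sq_ge0].
- apply: mulr_ge0; [apply: mulr_ge0; [apply: sq_ge0|exact: ltW]|]; by rewrite subr_ge0.
- by apply: mulr_gt0; [apply: mulr_gt0; [apply: mulr_gt0|apply: sq_gt0]| apply: mulr_gt0].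
Qed.

Definition cA (p1 q1 r1 s1 p2 q2 r2 s2 : R) : R := q1*r2 - q2*r1.
Definition cB (p1 q1 r1 s1 p2 q2 r2 s2 : R) : R := q2*(p1-s1) - q1*(p2-s2).
Definition cC (p1 q1 r1 s1 p2 q2 r2 s2 : R) : R := r1*(p2-s2) - r2*(p1-s1).

Lemma np_case p1 q1 r1 s1 p2 q2 r2 s2 :
  0 < p1*s1 - q1*r1 -> 0 < p2*s2 - q2*r2 ->
  0 <= - cA p1 q1 r1 s1 p2 q2 r2 s2 * cA p1 q1 r1 s1 p2 q2 r2 s2
       - cB p1 q1 r1 s1 p2 q2 r2 s2 * cC p1 q1 r1 s1 p2 q2 r2 s2 ->
  cB p1 q1 r1 s1 p2 q2 r2 s2 - cC p1 q1 r1 s1 p2 q2 r2 s2 != 0 ->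
  exists a b c, [/\ 0 < Qf a b c, good p1 q1 r1 s1 a b c & good p2 q2 r2 s2 a b c].
Proof.
set A := cA _ _ _ _ _ _ _ _; set B := cB _ _ _ _ _ _ _ _; set C := cC _ _ _ _ _ _ _ _.
set D1 := p1*s1 - q1*r1; set D2 := p2*s2 - q2*r2.
move=> h1 h2 hdet hs.
set sg := B - C. set m := D1 * D2. set w1 := r1 - q1. set w2 := r2 - q2.
set k := w1*w1*D2 + w2*w2*D1.
have hm : 0 < m by apply: mulr_gt0.
have hk : 0 <= k by apply: addr_ge0; apply: mulr_ge0 => //; [apply: sq_ge0|exact: ltW|apply: sq_ge0|exact: ltW].
have EQ : Qf (k*(-C) + sg * m) (k*A) (k*B + sg * m) = k*k*(-A*A - B*C) + k*(sg*sg)* m + (sg*sg)*(m * m).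
  by rewrite /Qf /sg; rg.
have EL1 : Lf p1 q1 r1 s1 (k*(-C) + sg * m) (k*A) (k*B + sg * m) = sg * m * w1.
  by rewrite /Lf /sg /A /B /C /cA /cB /cC /w1; rg.
have EL2 : Lf p2 q2 r2 s2 (k*(-C) + sg * m) (k*A) (k*B + sg * m) = sg * m * w2.
  by rewrite /Lf /sg /A /B /C /cA /cB /cC /w2; rg.
have G1 : good p1 q1 r1 s1 (k*(-C) + sg * m) (k*A) (k*B + sg * m).
  rewrite /good EL1 EQ; apply: key_np => //.
  apply: (@leE _ _ (3*D1*D2*(w1*w1) + 4*D1*D1*(w2*w2))); first by rewrite /m /k /D1 /D2; rg.
  apply: addr_ge0; apply: mulr_ge0; try apply: sq_ge0; apply: mulr_ge0; try exact: ltW;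
    apply: mulr_ge0; exact: ltW.
have G2 : good p2 q2 r2 s2 (k*(-C) + sg * m) (k*A) (k*B + sg * m).
  rewrite /good EL2 EQ; apply: key_np => //.
  apply: (@leE _ _ (3*D1*D2*(w2*w2) + 4*D2*D2*(w1*w1))); first by rewrite /m /k /D1 /D2; rg.
  apply: addr_ge0; apply: mulr_ge0; try apply: sq_ge0; apply: mulr_ge0; try exact: ltW;
    apply: mulr_ge0; exact: ltW.
exists (k*(-C) + sg * m), (k*A), (k*B + sg * m); split => //.
move: G1; rewrite /good => G1.
have : 0 < 4 * D1 * Qf (k*(-C) + sg * m) (k*A) (k*B + sg * m) by apply: le_lt_trans G1; apply: sq_ge0.
by rewrite pmulr_rgt0 // mulr_gt0.
Qed.

Definition Nf (p q r s : R) : R := -(4*q*r) - (p-s)*(p-s).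
Definition Gf (p1 q1 r1 s1 p2 q2 r2 s2 : R) : R := (p1-s1)*(p2-s2) + 2*q1*r2 + 2*r1*q2.

Lemma ltC (x y x' y' : R) : x' < y' -> x = x' -> y = y' -> x < y.
Proof. by move=> h -> ->. Qed.

Lemma sqT (T : R) : T < 0 -> 0 < T * T.
Proof. by move=> h; apply: sq_gt0; rewrite lt_eqF. Qed.

Lemma pa_case p1 q1 r1 s1 p2 q2 r2 s2 :
  p1 + s1 < 0 -> p2 + s2 < 0 ->
  cA p1 q1 r1 s1 p2 q2 r2 s2 = 0 -> cB p1 q1 r1 s1 p2 q2 r2 s2 = 0 ->
  cC p1 q1 r1 s1 p2 q2 r2 s2 = 0 -> 0 < Nf p1 q1 r1 s1 ->
  exists a b c, [/\ 0 < Qf a b c, good p1 q1 r1 s1 a b c & good p2 q2 r2 s2 a b c].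
Proof.
move=> hT1 hT2 hA hB hC hN.
exists (-(2*r1)), (p1-s1), (2*q1); split.
- by rewrite (_ : Qf _ _ _ = Nf p1 q1 r1 s1) //; rewrite /Qf /Nf; rg.
- rewrite /good; apply: (@ltE _ _ ((p1+s1)*(p1+s1)*Nf p1 q1 r1 s1)).
    by rewrite /Qf /Nf /Lf; rg.
  by apply: mulr_gt0 => //; apply: sqT.
- rewrite /good; apply: (@ltE _ _ ((p2+s2)*(p2+s2)*Nf p1 q1 r1 s1)).
    have E : 4 * (p2 * s2 - q2 * r2) * Qf (- (2 * r1)) (p1 - s1) (2 * q1) -
      Lf p2 q2 r2 s2 (- (2 * r1)) (p1 - s1) (2 * q1) * Lf p2 q2 r2 s2 (- (2 * r1)) (p1 - s1) (2 * q1)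
      = (p2+s2)*(p2+s2)*Nf p1 q1 r1 s1 - 4 * (cA p1 q1 r1 s1 p2 q2 r2 s2 * cA p1 q1 r1 s1 p2 q2 r2 s2
         + cB p1 q1 r1 s1 p2 q2 r2 s2 * cC p1 q1 r1 s1 p2 q2 r2 s2).
      by rewrite /Qf /Nf /Lf /cA /cB /cC; rg.
    by rewrite E hA hB hC !mul0r addr0 mulr0 subr0.
  by apply: mulr_gt0 => //; apply: sqT.
Qed.

Lemma pb_case p1 q1 r1 s1 p2 q2 r2 s2 :
  0 < p1*s1 - q1*r1 -> 0 < p2*s2 - q2*r2 ->
  cA p1 q1 r1 s1 p2 q2 r2 s2 = 0 -> cB p1 q1 r1 s1 p2 q2 r2 s2 = 0 ->
  cC p1 q1 r1 s1 p2 q2 r2 s2 = 0 -> Nf p1 q1 r1 s1 < 0 ->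
  exists a b c, [/\ 0 < Qf a b c, good p1 q1 r1 s1 a b c & good p2 q2 r2 s2 a b c].
Proof.
move=> hD1 hD2 hA hB hC hN.
set N1 := Nf p1 q1 r1 s1; set w1 := r1 - q1.
have hQ : 0 < Qf (N1 - 2*r1*w1) ((p1-s1)*w1) (N1 + 2*q1*w1).
  rewrite (_ : Qf _ _ _ = N1 * (N1 - w1*w1)); last by rewrite /Qf /N1 /Nf /w1; rg.
  rewrite nmulr_rgt0 // subr_lt0; apply: lt_le_trans hN _; exact: sq_ge0.
exists (N1 - 2*r1*w1), ((p1-s1)*w1), (N1 + 2*q1*w1); split => //.
- rewrite /good (_ : Lf _ _ _ _ _ _ _ = 0); last by rewrite /Lf /N1 /Nf /w1; rg.
  by rewrite mul0r; apply: mulr_gt0 => //; apply: mulr_gt0.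
- rewrite /good (_ : Lf _ _ _ _ _ _ _ = -2*(r1+q1)*cA p1 q1 r1 s1 p2 q2 r2 s2
      + (p1-s1)*(cC p1 q1 r1 s1 p2 q2 r2 s2 + cB p1 q1 r1 s1 p2 q2 r2 s2)); last first.
    by rewrite /Lf /N1 /Nf /w1 /cA /cB /cC; rg.
  rewrite hA hB hC mulr0 addr0 mulr0 addr0 mul0r.
  by apply: mulr_gt0 => //; apply: mulr_gt0.
Qed.

Lemma ineq_c (T U w v : R) : 0 < T*T -> 0 < U*U ->
  (T*T*(U*U)*w)*(T*T*(U*U)*w) < T*T*((T*T*(U*U))*(T*T*(U*U)) + 2*(T*T*(U*U))*(T*T + U*U)*(w*w + v*v)).
Proof.
move=> hT hU.
apply: (@ltE _ _ (T*T*((T*T*(U*U))*(T*T*(U*U))) + (T*T*(U*U))*(T*T)*(2*(T*T)*(w*w) + 2*(T*T)*(v*v) + (U*U)*(w*w) + 2*(U*U)*(v*v)))); first by rg.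
have h2 : 0 < 2 :> R by [].
have hm : 0 < T*T*(U*U) by apply: mulr_gt0.
apply: ltr_pwDl; first by apply: mulr_gt0 => //; apply: mulr_gt0.
apply: mulr_ge0; first by apply: ltW; apply: mulr_gt0.
have hw := sq_ge0 w; have hv := sq_ge0 v; have hT' := ltW hT; have hU' := ltW hU.
by repeat apply: addr_ge0; apply: mulr_ge0 => //; apply: mulr_ge0.
Qed.

Lemma pc_case p1 q1 r1 s1 p2 q2 r2 s2 :
  p1 + s1 < 0 -> p2 + s2 < 0 ->
  cA p1 q1 r1 s1 p2 q2 r2 s2 = 0 -> cB p1 q1 r1 s1 p2 q2 r2 s2 = 0 ->
  cC p1 q1 r1 s1 p2 q2 r2 s2 = 0 -> Nf p1 q1 r1 s1 = 0 -> Nf p2 q2 r2 s2 = 0 ->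
  exists a b c, [/\ 0 < Qf a b c, good p1 q1 r1 s1 a b c & good p2 q2 r2 s2 a b c].
Proof.
move=> hT1 hT2 hA hB hC hN1 hN2.
set G := Gf p1 q1 r1 s1 p2 q2 r2 s2.
have hG : G = 0.
  have E : G * G = Nf p1 q1 r1 s1 * Nf p2 q2 r2 s2 + 4 * (cA p1 q1 r1 s1 p2 q2 r2 s2 * cA p1 q1 r1 s1 p2 q2 r2 s2
         + cB p1 q1 r1 s1 p2 q2 r2 s2 * cC p1 q1 r1 s1 p2 q2 r2 s2).
    by rewrite /G /Gf /Nf /cA /cB /cC; rg.
  move: E; rewrite hA hB hC hN1 !(mul0r, mulr0, addr0, add0r) => /eqP; rewrite mulf_eq0.
  by case/orP => /eqP.
set T1 := p1 + s1; set T2 := p2 + s2; set w1 := r1 - q1; set w2 := r2 - q2.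
set m := T1*T1*(T2*T2); set k := T1*T1 + T2*T2.
set a := m + k*(2*w1*r1 + 2*w2*r2).
set b := -(k*(w1*(p1-s1) + w2*(p2-s2))).
set c := m - k*(2*w1*q1 + 2*w2*q2).
have EQ : Qf a b c = m * m + 2 * m * k * (w1*w1 + w2*w2)
   + k*k*(w1*w1*Nf p1 q1 r1 s1 - 2*w1*w2*G + w2*w2*Nf p2 q2 r2 s2).
  by rewrite /Qf /a /b /c /G /Gf /Nf /w1 /w2; rg.
rewrite hN1 hN2 hG !mulr0 !subr0 addr0 mulr0 addr0 in EQ.
have EL1 : Lf p1 q1 r1 s1 a b c = m * w1 + k*(w1 * Nf p1 q1 r1 s1 - w2 * G).
  by rewrite /Lf /a /b /c /G /Gf /Nf /w1 /w2; rg.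
have EL2 : Lf p2 q2 r2 s2 a b c = m * w2 + k*(w2 * Nf p2 q2 r2 s2 - w1 * G).
  by rewrite /Lf /a /b /c /G /Gf /Nf /w1 /w2; rg.
rewrite hN1 hG !mulr0 subr0 mulr0 addr0 in EL1.
rewrite hN2 hG !mulr0 subr0 mulr0 addr0 in EL2.
have E1 : 4 * (p1*s1 - q1*r1) = T1 * T1 + Nf p1 q1 r1 s1 by rewrite /T1 /Nf; rg.
have E2 : 4 * (p2*s2 - q2*r2) = T2 * T2 + Nf p2 q2 r2 s2 by rewrite /T2 /Nf; rg.
rewrite hN1 addr0 in E1; rewrite hN2 addr0 in E2.
have G1 : good p1 q1 r1 s1 a b c.
  by rewrite /good EL1 E1 EQ; apply: ineq_c; apply: sqT.
have G2 : good p2 q2 r2 s2 a b c.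
  rewrite /good EL2 E2 EQ; have H := ineq_c T2 T1 w2 w1 (sqT _ hT2) (sqT _ hT1); eapply ltC; [exact: H| |].
    by rewrite /m; rg.
  by rewrite /m /k; rg.
exists a, b, c; split => //.
move: G1; rewrite /good => G1.
have : 0 < 4 * (p1*s1 - q1*r1) * Qf a b c by apply: le_lt_trans G1; apply: sq_ge0.
by rewrite E1 pmulr_rgt0 //; apply: sqT.
Qed.

Lemma swapA p1 q1 r1 s1 p2 q2 r2 s2 : cA p2 q2 r2 s2 p1 q1 r1 s1 = - cA p1 q1 r1 s1 p2 q2 r2 s2.
Proof. rewrite /cA; rg. Qed.
Lemma swapB p1 q1 r1 s1 p2 q2 r2 s2 : cB p2 q2 r2 s2 p1 q1 r1 s1 = - cB p1 q1 r1 s1 p2 q2 r2 s2.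
Proof. rewrite /cB; rg. Qed.
Lemma swapC p1 q1 r1 s1 p2 q2 r2 s2 : cC p2 q2 r2 s2 p1 q1 r1 s1 = - cC p1 q1 r1 s1 p2 q2 r2 s2.
Proof. rewrite /cC; rg. Qed.

Lemma sq0 (x : R) : x * x = 0 -> x = 0.
Proof. by move/eqP; rewrite mulf_eq0 orbb => /eqP. Qed.

Lemma exists_n0 p1 q1 r1 s1 p2 q2 r2 s2 :
  p1 + s1 < 0 -> 0 < p1*s1 - q1*r1 -> p2 + s2 < 0 -> 0 < p2*s2 - q2*r2 ->
  0 <= - cA p1 q1 r1 s1 p2 q2 r2 s2 * cA p1 q1 r1 s1 p2 q2 r2 s2
       - cB p1 q1 r1 s1 p2 q2 r2 s2 * cC p1 q1 r1 s1 p2 q2 r2 s2 ->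
  exists a b c, [/\ 0 < Qf a b c, good p1 q1 r1 s1 a b c & good p2 q2 r2 s2 a b c].
Proof.
move=> hT1 hD1 hT2 hD2 hdet.
case: (eqVneq (cB p1 q1 r1 s1 p2 q2 r2 s2 - cC p1 q1 r1 s1 p2 q2 r2 s2) 0) => hs; last by apply: np_case.
move/eqP: hs; rewrite subr_eq0 => /eqP hBC.
rewrite -hBC in hdet.
set A := cA p1 q1 r1 s1 p2 q2 r2 s2 in hdet *; set B := cB p1 q1 r1 s1 p2 q2 r2 s2 in hdet hBC *.
have hAB : A * A + B * B = 0.
  apply: le_anti; rewrite addr_ge0 ?sq_ge0 // andbT.
  by move: hdet; rewrite mulNr -opprD oppr_ge0.
move/eqP: hAB; rewrite paddr_eq0 ?sq_ge0 // => /andP [/eqP /sq0 hA /eqP /sq0 hB].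
have hC : cC p1 q1 r1 s1 p2 q2 r2 s2 = 0 by rewrite -hBC.
have hA' : cA p2 q2 r2 s2 p1 q1 r1 s1 = 0 by rewrite swapA -/A hA oppr0.
have hB' : cB p2 q2 r2 s2 p1 q1 r1 s1 = 0 by rewrite swapB -/B hB oppr0.
have hC' : cC p2 q2 r2 s2 p1 q1 r1 s1 = 0 by rewrite swapC hC oppr0.
case: (ltgtP (Nf p1 q1 r1 s1) 0) => hN1.
- by apply: pb_case.
- by apply: pa_case.
case: (ltgtP (Nf p2 q2 r2 s2) 0) => hN2.
- by have [a [b [c [? ? ?]]]] := @pb_case p2 q2 r2 s2 p1 q1 r1 s1 hD2 hD1 hA' hB' hC' hN2; exists a, b, c.
- by have [a [b [c [? ? ?]]]] := @pa_case p2 q2 r2 s2 p1 q1 r1 s1 hT2 hT1 hA' hB' hC' hN2; exists a, b, c.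
by apply: pc_case.
Qed.

Lemma exists_n p1 q1 r1 s1 p2 q2 r2 s2 :
  p1 + s1 < 0 -> 0 < p1*s1 - q1*r1 -> p2 + s2 < 0 -> 0 < p2*s2 - q2*r2 ->
  0 <= - cA p1 q1 r1 s1 p2 q2 r2 s2 * cA p1 q1 r1 s1 p2 q2 r2 s2
       - cB p1 q1 r1 s1 p2 q2 r2 s2 * cC p1 q1 r1 s1 p2 q2 r2 s2 ->
  exists a b c, [/\ 0 < a, 0 < Qf a b c, good p1 q1 r1 s1 a b c & good p2 q2 r2 s2 a b c].
Proof.
move=> hT1 hD1 hT2 hD2 hdet.
have [a [b [c [hQ g1 g2]]]] := @exists_n0 p1 q1 r1 s1 p2 q2 r2 s2 hT1 hD1 hT2 hD2 hdet.
have EQ : Qf (-a) (-b) (-c) = Qf a b c by rewrite /Qf; rg.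
have EL : forall p q r s, Lf p q r s (-a) (-b) (-c) = - Lf p q r s a b c.
  by move=> p q r s; rewrite /Lf; rg.
case: (ltgtP a 0) => ha.
- exists (-a), (-b), (-c); split; rewrite ?oppr_gt0 ?EQ //.
  + by rewrite /good EL mulrNN EQ.
  + by rewrite /good EL mulrNN EQ.
- by exists a, b, c.
move: hQ; rewrite /Qf ha mul0r sub0r oppr_gt0 => hb.
by have := lt_le_trans hb (sq_ge0 b); rewrite ltxx.
Qed.
Lemma ord2P (i : 'I_2) : i = 0 \/ i = 1.
Proof. case: i => [[|[|i]] Hi]; [left|right|by []]; exact: val_inj. Qed.
Lemma mul2 m n (A : 'M[R]_(m,2)) (B : 'M[R]_(2,n)) i j : (A *m B) i j = A i 0 * B 0 j + A i 1 * B 1 j.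
Proof. rewrite !mxE !big_ord_recr big_ord0 /= add0r.
rewrite (_ : widen_ord (leqnSn 1) ord_max = 0 :> 'I_2); last by apply: val_inj.
by rewrite (_ : ord_max = 1 :> 'I_2); last by apply: val_inj.
Qed.
Lemma det2 (M : 'M[R]_2) : \det M = M 0 0 * M 1 1 - M 0 1 * M 1 0.
Proof. rewrite (expand_det_row _ 0) !big_ord_recr big_ord0 /= add0r /cofactor !det_mx11 !mxE /=.
rewrite (_ : widen_ord (leqnSn 1) ord_max = 0 :> 'I_2); last by apply: val_inj.
rewrite (_ : lift 0 0 = 1 :> 'I_2); last by apply: val_inj.
rewrite (_ : lift ord_max 0 = 0 :> 'I_2); last by apply: val_inj.
rewrite (_ : ord_max = 1 :> 'I_2); last by apply: val_inj.
by rewrite expr0 expr1 !mul1r mulN1r mulrN.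
Qed.
Definition cv (x0 x1 : R) : 'cV[R]_2 := \col_(i < 2) (if (i : nat) == 0%N then x0 else x1).
Lemma cv0 x0 x1 : cv x0 x1 0 0 = x0. Proof. by rewrite mxE. Qed.
Lemma cv1 x0 x1 : cv x0 x1 1 0 = x1. Proof. by rewrite mxE. Qed.
Lemma cv_ext (x y : 'cV[R]_2) : x 0 0 = y 0 0 -> x 1 0 = y 1 0 -> x = y.
Proof. move=> h0 h1; apply/matrixP => i j; rewrite (ord1 j); by case: (ord2P i) => ->. Qed.
Lemma cv_neq0 (x : 'cV[R]_2) : x != 0 -> x 0 0 != 0 \/ x 1 0 != 0.
Proof.
move=> hx; case: (eqVneq (x 0 0) 0) => h0; last by left.
case: (eqVneq (x 1 0) 0) => h1; last by right.
have hx0 : x = 0 by apply: cv_ext; rewrite ?mxE.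
by rewrite hx0 eqxx in hx.
Qed.
Lemma qfE (M : 'M[R]_2) x : quad_form M x =
  (x 0 0 * M 0 0 + x 1 0 * M 1 0) * x 0 0 + (x 0 0 * M 0 1 + x 1 0 * M 1 1) * x 1 0.
Proof. by rewrite /quad_form mul2 !mul2 !mxE. Qed.
Definition Pm (a b c : R) : 'M[R]_2 :=
  \matrix_(i < 2, j < 2) (if (i : nat) == j then (if (i : nat) == 0%N then a else c) else b).
Lemma PmE a b c : [/\ Pm a b c 0 0 = a, Pm a b c 0 1 = b, Pm a b c 1 0 = b & Pm a b c 1 1 = c].
Proof. by rewrite !mxE. Qed.
Lemma qf_pos (M : 'M[R]_2) : M 1 0 = M 0 1 -> 0 < M 0 0 -> 0 < M 0 0 * M 1 1 - M 0 1 * M 0 1 ->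
  forall x, x != 0 -> 0 < quad_form M x.
Proof.
move=> hs h0 hd x hx; rewrite qfE hs.
set x0 := x 0 0; set x1 := x 1 0; set m00 := M 0 0; set m01 := M 0 1; set m11 := M 1 1.
have E : m00 * ((x0 * m00 + x1 * m01) * x0 + (x0 * m01 + x1 * m11) * x1)
   = (m00 * x0 + m01 * x1) * (m00 * x0 + m01 * x1) + (m00 * m11 - m01 * m01) * (x1 * x1) by rg.
rewrite -(pmulr_rgt0 _ h0) E.
case: (cv_neq0 _ hx) => hx'.
- case: (eqVneq x1 0) => h1.
    rewrite h1 !mulr0 !addr0; apply: sq_gt0; rewrite mulf_neq0 //; by rewrite gt_eqF.
  by apply: ltr_wpDl; [exact: sq_ge0 | apply: mulr_gt0 => //; apply: sq_gt0].
- by apply: ltr_wpDl; [exact: sq_ge0 | apply: mulr_gt0 => //; apply: sq_gt0].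
Qed.

Lemma qfN (M : 'M[R]_2) x : quad_form (- M) x = - quad_form M x.
Proof. rewrite !qfE !mxE. move: (x 0 0) (x 1 0) (M 0 0) (M 0 1) (M 1 0) (M 1 1) => a b c d e f. rg. Qed.

Lemma qf_neg (M : 'M[R]_2) : M 1 0 = M 0 1 -> M 0 0 < 0 -> 0 < M 0 0 * M 1 1 - M 0 1 * M 0 1 ->
  forall x, x != 0 -> quad_form M x < 0.
Proof.
move=> hs h0 hd x hx; rewrite -oppr_gt0 -qfN; apply: (qf_pos (-M)) => //.
- by rewrite !mxE hs.
- by rewrite mxE oppr_gt0.
- by rewrite !mxE !mulNr !mulrN !opprK.
Qed.

Lemma nd_scalar p q r s a b c : p + s < 0 -> 0 < a -> 0 < Qf a b c -> good p q r s a b c ->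
  2*(p*a + r*b) < 0 /\
  0 < 2*(p*a + r*b) * (2*(q*b + s*c)) - (p*b + r*c + a*q + b*s) * (p*b + r*c + a*q + b*s).
Proof.
move=> hT ha hQ hg.
set m00 := 2*(p*a + r*b); set m01 := p*b + r*c + a*q + b*s; set m11 := 2*(q*b + s*c).
have hd : 0 < m00 * m11 - m01 * m01.
  move: hg; rewrite /good => hg.
  rewrite (_ : m00 * m11 - m01 * m01 = 4 * (p*s - q*r) * Qf a b c - Lf p q r s a b c * Lf p q r s a b c).
    by rewrite subr_gt0.
  by rewrite /m00 /m11 /m01 /Qf /Lf; rg.
split => //.
case: (ltP m00 0) => // h0.
have hm0 : m00 != 0.
  apply/eqP => e; move: hd; rewrite e mul0r sub0r oppr_gt0 => hd.
  by have := lt_le_trans hd (sq_ge0 m01); rewrite ltxx.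
have h0' : 0 < m00 by rewrite lt_def hm0 h0.
have E : a * m00 * (2 * (p+s) * Qf a b c) = Qf a b c * m00 * m00 + (b * m00 - a * m01) * (b * m00 - a * m01)
   + a * a * (m00 * m11 - m01 * m01) by rewrite /m00 /m11 /m01 /Qf; rg.
have L : a * m00 * (2 * (p+s) * Qf a b c) < 0.
  rewrite pmulr_rlt0; last by apply: mulr_gt0.
  by rewrite pmulr_llt0 // pmulr_rlt0.
have G : 0 < Qf a b c * m00 * m00 + (b * m00 - a * m01) * (b * m00 - a * m01) + a * a * (m00 * m11 - m01 * m01).
  apply: ltr_wpDr; first by apply: mulr_ge0; [apply: sq_ge0| exact: ltW].
  by apply: ltr_wpDr; [exact: sq_ge0| apply: mulr_gt0 => //; apply: mulr_gt0].
by move: L; rewrite E => L; have := lt_trans G L; rewrite ltxx.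
Qed.
Lemma addmE (X Y : 'M[R]_2) i j : (X + Y) i j = X i j + Y i j.
Proof. by rewrite mxE. Qed.
Lemma trE (X : 'M[R]_2) i j : X^T i j = X j i.
Proof. by rewrite mxE. Qed.
Lemma PmT a b c : (Pm a b c)^T = Pm a b c.
Proof.
apply/matrixP => i j; rewrite trE.
by case: (PmE a b c) => h00 h01 h10 h11; case: (ord2P i) => ->; case: (ord2P j) => ->; rewrite ?h00 ?h01 ?h10 ?h11.
Qed.

Lemma nd_mat (A : 'M[R]_2) a b c : A 0 0 + A 1 1 < 0 -> 0 < a -> 0 < Qf a b c ->
  good (A 0 0) (A 0 1) (A 1 0) (A 1 1) a b c -> neg_def (A^T *m Pm a b c + Pm a b c *m A).
Proof.
move=> hT ha hQ hg.
have [h0 hd] := nd_scalar _ _ _ _ _ _ _ hT ha hQ hg.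
case: (PmE a b c) => h00 h01 h10 h11.
set M := A^T *m Pm a b c + Pm a b c *m A.
have E : forall i j, M i j = (A 0 i * Pm a b c 0 j + A 1 i * Pm a b c 1 j) + (Pm a b c i 0 * A 0 j + Pm a b c i 1 * A 1 j).
  by move=> i j; rewrite /M addmE !mul2 !trE.
split; first by rewrite /M linearD /= !trmx_mul trmxK PmT addrC.
apply: qf_neg.
- by rewrite !E ?h00 ?h01 ?h10 ?h11; move: (A 0 0) (A 0 1) (A 1 0) (A 1 1) => p q r s; rg.
- by rewrite !E ?h00 ?h01 ?h10 ?h11; move: h0; move: (A 0 0) (A 0 1) (A 1 0) (A 1 1) => p q r s;
    rewrite (_ : 2 * (p * a + r * b) = p * a + r * b + (a * p + b * r)) //; rg.
- rewrite !E ?h00 ?h01 ?h10 ?h11; move: hd; move: (A 0 0) (A 0 1) (A 1 0) (A 1 1) => p q r s.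
  by rewrite (_ : 2 * (p * a + r * b) = p * a + r * b + (a * p + b * r)); last rg;
    rewrite (_ : 2 * (q * b + s * c) = q * b + s * c + (b * q + c * s)); last rg;
    rewrite (_ : p * b + r * c + a * q + b * s = p * b + r * c + (a * q + b * s)); last rg.
Qed.

Lemma pd_mat a b c : 0 < a -> 0 < Qf a b c -> pos_def (Pm a b c).
Proof.
move=> ha hQ; split; first exact: PmT.
case: (PmE a b c) => h00 h01 h10 h11.
by apply: qf_pos; rewrite ?h00 ?h01 ?h10 ?h11.
Qed.
Lemma can4 (x y : R) : 4 * x = 4 * y -> x = y.
Proof. by apply: mulfI; rewrite pnatr_eq0. Qed.

Lemma root_lemma (T D sq l : R) : sq*sq = T*T - 4*D -> T + sq = 2* l -> l* l - T* l + D = 0.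
Proof.
move=> hs hl; apply: can4.
have E : 4*(l* l - T* l + D) = (2* l)*(2* l) - 2*T*(2* l) + 4*D by rg.
rewrite E -hl (_ : (T + sq) * (T + sq) - 2 * T * (T + sq) + 4 * D = sq * sq - T * T + 4 * D); last by rg.
rewrite hs; rg.
Qed.

Lemma cplx_lemma (p q r s a b sq : R) : 2*a = p + s -> 2*b = sq ->
  sq*sq = 4*(p*s - q*r) - (p+s)*(p+s) -> b*b = -(a-s)*(a-s) - q*r.
Proof.
move=> ha hb hs; apply: can4.
rewrite (_ : 4 * (b*b) = (2*b)*(2*b)); last by rg.
rewrite hb hs (_ : 4 * (- (a - s) * (a - s) - q * r) = - (2*a - 2*s)*(2*a - 2*s) - 4*(q*r)); last by rg.
rewrite ha; rg.
Qed.

Lemma eig_vec (A : 'M[R]_2) (x : 'cV[R]_2) l : x != 0 -> (A *m x) 0 0 = l * x 0 0 ->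
  (A *m x) 1 0 = l * x 1 0 -> complex_eigenvalue A l 0.
Proof.
move=> hx h0 h1; exists x, 0; split.
- by rewrite hx.
- by rewrite scale0r subr0; apply: cv_ext; rewrite ?h0 ?h1 mxE.
- by rewrite mulmx0 scale0r scaler0 addr0.
Qed.

Lemma real_eig (A : 'M[R]_2) l :
  l* l - (A 0 0 + A 1 1)* l + (A 0 0 * A 1 1 - A 0 1 * A 1 0) = 0 -> complex_eigenvalue A l 0.
Proof.
have M2 : forall x0 x1 i, (A *m cv x0 x1) i 0 = A i 0 * x0 + A i 1 * x1.
  by move=> x0 x1 i; rewrite mul2 cv0 cv1.
move: M2; set p := A 0 0; set q := A 0 1; set r := A 1 0; set s := A 1 1 => M2 H.
case: (eqVneq q 0) => hq.
- case: (eqVneq l s) => hls.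
    apply: (eig_vec _ (cv 0 1)).
    + by apply/eqP => e; have := congr1 (fun v : 'cV[R]_2 => v 1 0) e; rewrite cv1 mxE; apply/eqP; rewrite oner_eq0.
    + by rewrite M2 cv0 -/p -/q hq !mulr0 mul0r addr0.
    + by rewrite M2 cv1 -/r -/s hls mulr0 add0r !mulr1.
  have hlp : l = p.
    have : (l - p) * (l - s) = 0.
      rewrite -H hq; rg.
    by move/eqP; rewrite mulf_eq0 !subr_eq0 (negbTE hls) orbF => /eqP.
  apply: (eig_vec _ (cv (l - s) r)).
  + apply/eqP => e; have := congr1 (fun v : 'cV[R]_2 => v 0 0) e; rewrite cv0 mxE; apply/eqP.
    by rewrite subr_eq0.
  + by rewrite M2 cv0 -/p -/q hq hlp mul0r addr0.
  + rewrite M2 cv1 -/r -/s; rg.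
- apply: (eig_vec _ (cv q (l - p))).
  + apply/eqP => e; have := congr1 (fun v : 'cV[R]_2 => v 0 0) e; rewrite cv0 mxE; apply/eqP; exact: hq.
  + rewrite M2 ?cv0 ?cv1 -/p -/q; rg.
  + rewrite M2 ?cv0 ?cv1 -/r -/s; apply/eqP; rewrite -subr_eq0; apply/eqP.
    rewrite -[RHS]oppr0 -H; rg.
Qed.
Lemma cplx_eig (A : 'M[R]_2) a b : A 0 0 + A 1 1 = 2*a ->
  b*b = -(a - A 1 1)*(a - A 1 1) - A 0 1 * A 1 0 -> b != 0 -> complex_eigenvalue A a b.
Proof.
have M2 : forall x0 x1 i, (A *m cv x0 x1) i 0 = A i 0 * x0 + A i 1 * x1.
  by move=> x0 x1 i; rewrite mul2 cv0 cv1.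
move: M2; set p := A 0 0; set q := A 0 1; set r := A 1 0; set s := A 1 1 => M2 hT hb hb0.
have hp : p = 2*a - s by rewrite -hT addrK.
exists (cv b 0), (cv (-(p - a)) (-r)); split.
- apply/orP; left; apply/eqP => e; have := congr1 (fun v : 'cV[R]_2 => v 0 0) e.
  by rewrite cv0 mxE; apply/eqP.
- apply: cv_ext; rewrite M2 !mxE /= -/p -/q -/r -/s; rg.
- apply: cv_ext; rewrite M2 !mxE /= -/p -/q -/r -/s.
  + apply/eqP; rewrite -subr_eq0; apply/eqP.
    rewrite (_ : _ - _ = (-(a - s)*(a - s) - q*r) - b * b); first by rewrite hb subrr.
    rewrite hp; rg.
  + rewrite hp; rg.
Qed.

Lemma hurwitz_TD (A : 'M[R]_2) : hurwitz A -> A 0 0 + A 1 1 < 0 /\ 0 < A 0 0 * A 1 1 - A 0 1 * A 1 0.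
Proof.
move=> hH.
set T := A 0 0 + A 1 1; set D := A 0 0 * A 1 1 - A 0 1 * A 1 0.
set h : R := 2^-1.
have h2 : 2 * h = 1 by rewrite /h mulfV // pnatr_eq0.
have hh : 0 < h by rewrite /h invr_gt0.
case: (leP 0 (T*T - 4*D)) => hDel.
- set sq := Num.sqrt (T*T - 4*D).
  have hsq : sq * sq = T*T - 4*D by rewrite -expr2 sqr_sqrtr.
  have hsq0 : 0 <= sq by exact: sqrtr_ge0.
  have hl : T + sq = 2 * ((T + sq) * h) by rewrite mulrCA h2 mulr1.
  have := hH _ _ (real_eig _ _ (root_lemma _ _ _ _ hsq hl)).
  rewrite pmulr_llt0 // => hneg.
  have hT : T < 0.
    by apply: le_lt_trans hneg; rewrite lerDl.
  split => //.
  rewrite ltNge; apply/negP => hD.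
  have : `|T| <= sq.
    rewrite /sq -sqrtr_sqr ler_sqrt // expr2 lerDl oppr_ge0 pmulr_rle0 //.
  have : - T <= `|T| by rewrite ler_normr lexx orbT.
  move=> g1 g2; have := le_trans g1 g2.
  rewrite -subr_ge0 opprK addrC => g3.
  by have := le_lt_trans g3 hneg; rewrite ltxx.
- set sq := Num.sqrt (- (T*T - 4*D)).
  have hD : 0 < D.
    have : T*T < 4*D by rewrite -subr_lt0.
    move=> /(le_lt_trans (sq_ge0 T)); by rewrite pmulr_rgt0.
  have hsq : sq * sq = 4 * D - T*T.
    rewrite -expr2 sqr_sqrtr; [by rewrite opprB | by rewrite oppr_ge0 ltW].
  have hsq0 : 0 < sq by rewrite sqrtr_gt0 oppr_gt0.
  have ha : 2 * (T * h) = T by rewrite mulrCA h2 mulr1.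
  have hb : 2 * (sq * h) = sq by rewrite mulrCA h2 mulr1.
  have hbb := cplx_lemma (A 0 0) (A 0 1) (A 1 0) (A 1 1) (T*h) (sq*h) sq ha hb hsq.
  have hb0 : sq * h != 0 by rewrite mulf_neq0 ?gt_eqF.
  have := hH _ _ (cplx_eig _ _ _ (esym ha) hbb hb0).
  by rewrite pmulr_llt0.
Qed.
Lemma submE (X Y : 'M[R]_2) i j : (X - Y) i j = X i j - Y i j.
Proof. by rewrite !mxE. Qed.

Lemma det_comm (A1 A2 : 'M[R]_2) : \det (commutator A1 A2) =
  - cA (A1 0 0) (A1 0 1) (A1 1 0) (A1 1 1) (A2 0 0) (A2 0 1) (A2 1 0) (A2 1 1)
    * cA (A1 0 0) (A1 0 1) (A1 1 0) (A1 1 1) (A2 0 0) (A2 0 1) (A2 1 0) (A2 1 1)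
  - cB (A1 0 0) (A1 0 1) (A1 1 0) (A1 1 1) (A2 0 0) (A2 0 1) (A2 1 0) (A2 1 1)
    * cC (A1 0 0) (A1 0 1) (A1 1 0) (A1 1 1) (A2 0 0) (A2 0 1) (A2 1 0) (A2 1 1).
Proof.
rewrite det2 /commutator !submE !mul2 /cA /cB /cC.
move: (A1 0 0) (A1 0 1) (A1 1 0) (A1 1 1) (A2 0 0) (A2 0 1) (A2 1 0) (A2 1 1) => p1 q1 r1 s1 p2 q2 r2 s2.
rg.
Qed.

Lemma main_sec (A1 A2 : 'M[R]_2) :
  hurwitz A1 -> hurwitz A2 ->
  0 <= \det (commutator A1 A2) ->
  exists P : 'M[R]_2,
    [/\ pos_def P,
        neg_def (A1^T *m P + P *m A1) &
        neg_def (A2^T *m P + P *m A2)].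
Proof.
move=> h1 h2 hdet.
have [hT1 hD1] := hurwitz_TD _ h1.
have [hT2 hD2] := hurwitz_TD _ h2.
rewrite det_comm in hdet.
have [a [b [c [ha hQ g1 g2]]]] := exists_n _ _ _ _ _ _ _ _ hT1 hD1 hT2 hD2 hdet.
exists (Pm a b c); split.
- exact: pd_mat.
- exact: nd_mat.
- exact: nd_mat.
Qed.

End S.

Theorem mainTheorem2 (R : rcfType) (A1 A2 : 'M[R]_2) :
  hurwitz A1 -> hurwitz A2 ->
  0 <= \det (commutator A1 A2) ->
  exists P : 'M[R]_2,
    [/\ pos_def P,
        neg_def (A1^T *m P + P *m A1) &
        neg_def (A2^T *m P + P *m A2)].
Proof. exact: main_sec. Qed.
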